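(* Let $n>2r\ge 4$, let $G=\mathrm{S}_n$ acting on $\Omega=\binom{[n]}{r}$, let $\mathcal{B}_i=\{\alpha_1,\dots,\alpha_i\}\subseteq\Omega$, and let $G_i=G_{(\mathcal{B}_i)}$ be its pointwise stabiliser. Let $\alpha\in\Omega$. Then $|\alpha^{G_i}|$ is maximal among the orbit sizes $|\beta^{G_i}|$, $\beta\in\Omega$, if and only if there is a possible output $\alpha_{i+1}$ of $\mathtt{MetaGreedy}(\mathcal{B}_i)$ such that $(G_i)_\alpha\cong (G_i)_{\alpha_{i+1}}$.
   Context: For $u\in[n]$ let $N_{\mathcal{B}_i}(u)=\{\alpha\in\mathcal{B}_i : u\in\alpha\}$. The procedure $\mathtt{MetaGreedy}(\mathcal{B}_i)$ is: set $M_0=\emptyset$; for $j=1,\dots,r$, choose $m_j\in[n]\setminus M_{j-1}$ to be any point from any $G_i$-orbit $\Delta\subseteq[n]$ that maximises $\frac{|\Delta\setminus M_{j-1}|}{|\Delta\cap M_{j-1}|+1}$, and if this maximum value equals $1$ then additionally choose $m_j$ to be such a point with smallest neighbourhood size $|N_{\mathcal{B}_i}(m_j)|$; set $M_j=M_{j-1}\cup\{m_j\}$. The output is $\alpha_{i+1}=M_r$. Different choices give different possible outputs. *)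

(* Defs.v *)
From mathcomp Require Import all_boot all_order all_algebra all_fingroup.
Set Implicit Arguments. Unset Strict Implicit. Unset Printing Implicit Defensive.
Import GRing.Theory Num.Theory.
Local Open Scope group_scope.

Definition rsubset (n r : nat) (a : {set 'I_n}) : Prop := #|a| = r.

(* G_i = G_(B_i): pointwise stabiliser in Sym([n]) of the family B of r-sets,
   for the induced action 'P^* of permutations on subsets of 'I_n. *)
Definition ptstab (n : nat) (B : {set {set 'I_n}}) : {set {perm 'I_n}} :=
  'C(B | 'P^*).

Definition nbhd (n : nat) (B : {set {set 'I_n}}) (u : 'I_n) : {set {set 'I_n}} :=
  [set a in B | u \in a].

Definition greedy_ratio (n : nat) (D M : {set 'I_n}) : rat :=
  ((#|D :\: M|)%:R / (#|D :&: M|.+1)%:R)%R.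

Definition pt_orbit (n : nat) (B : {set {set 'I_n}}) (x : 'I_n) : {set 'I_n} :=
  orbit 'P (ptstab B) x.

Definition max_orbit (n : nat) (B : {set {set 'I_n}}) (M D : {set 'I_n}) : Prop :=
  forall y : 'I_n, (greedy_ratio (pt_orbit B y) M <= greedy_ratio D M)%R.

Definition greedy_step (n : nat) (B : {set {set 'I_n}}) (M : {set 'I_n}) (m : 'I_n) : Prop :=
  m \notin M /\
  exists D : {set 'I_n},
    [/\ (exists x, D = pt_orbit B x), m \in D, max_orbit B M D &
        (greedy_ratio D M = 1%R ->
         forall (m' : 'I_n) (D' : {set 'I_n}),
           m' \notin M -> (exists x, D' = pt_orbit B x) -> m' \in D' ->
           max_orbit B M D' -> #|nbhd B m| <= #|nbhd B m'|)%N].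

(* alpha' is a possible output M_r of MetaGreedy(B): there are choices
   m_1, ..., m_r (indexed by 'I_r) such that each m_j is a legal step
   with M_{j-1} = {m_1, ..., m_{j-1}}, and alpha' = {m_1, ..., m_r}. *)
Definition metagreedy_output (n r : nat) (B : {set {set 'I_n}}) (a' : {set 'I_n}) : Prop :=
  exists m : 'I_r -> 'I_n,
    (forall j : 'I_r, greedy_step B [set m k | k : 'I_r & (k < j)%N] (m j)) /\
    a' = [set m k | k : 'I_r].

(* Main.v *)
Require Import Defs.
From mathcomp Require Import all_boot all_order all_algebra all_fingroup.
From mathcomp Require Import zify ring.
Set Implicit Arguments. Unset Strict Implicit. Unset Printing Implicit Defensive.
Import Order.TTheory GRing.Theory Num.Theory.
Local Open Scope group_scope.

Lemma arith1 a a' b b' d e : (a'.+1 <= a <= d -> b.+1 <= b' <= e ->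
  b' * (d - a') <= (e - b').+1 * a'.+1 -> (d - a).+1 * b.+1 <= a * (e - b))%N.
Proof. move=> /andP[h1 h2] /andP[h3 h4] h5. nia. Qed.
Lemma arith0 a d : (a * (d - a) <= (d - a).+1 * a.+1)%N.
Proof. nia. Qed.
Lemma arith2 O O' P Q : (O' * P = O * Q -> O' <= O -> P < Q -> 0 < O -> False)%N.
Proof. nia. Qed.
Lemma arith3 O O' P Q : (O' * P = O * Q -> P <= Q -> 0 < P -> O <= O')%N.
Proof. nia. Qed.

Lemma exists_max (T : finType) (P : pred T) (f : T -> rat) i0 : P i0 ->
  exists2 x, P x & forall y, P y -> (f y <= f x)%R.
Proof. move=> Pi0; case: (arg_maxP f Pi0) => x Px H; exists x => // y /H. Qed.

Lemma arith4 a b c d e : (c.+1 <= a <= d -> a * (e - b) <= (d - a).+1 * b.+1 ->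
  (e - b) * c.+1 <= (d - c) * b.+1)%N.
Proof. move=> /andP[h1 h2] h3. nia. Qed.

Lemma arith5 cx cy dx dy : (cx < dx -> (dy - cy) * cx.+1 <= (dx - cx) * cy.+1 ->
  cx.+1 * (dy - cy) <= (dx - cx.+1).+1 * cy.+1)%N.
Proof. move=> h1 h2. nia. Qed.

Lemma arith6 cx cy dx dy : (cy.+1 < dy -> cx * (dy - cy) <= (dx - cx).+1 * cy.+1 ->
  cx * (dy - cy.+1) <= (dx - cx).+1 * cy.+2)%N.
Proof. move=> h1 h2. nia. Qed.

Section Cells.
Variables (n : nat) (B : {set {set 'I_n}}).
Local Notation G := (ptstab B).
Local Notation cell := (pt_orbit B).

Lemma perm_imset_fix (h : {perm 'I_n}) (b : {set 'I_n}) :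
  (forall z, z \in b -> h z \in b) -> h @: b = b.
Proof.
move=> Hb; apply/eqP; rewrite eqEcard card_imset ?leqnn ?andbT; last exact: perm_inj.
by apply/subsetP => _ /imsetP[z zb ->]; apply: Hb.
Qed.

Lemma ptstabP (h : {perm 'I_n}) :
  reflect (forall b, b \in B -> h @: b = b) (h \in G).
Proof.
by apply: (iffP astabP) => H b /H.
Qed.

Lemma ptstab_mem (h : {perm 'I_n}) b z : h \in G -> b \in B -> (h z \in b) = (z \in b).
Proof.
move=> /ptstabP hG bB; rewrite -{1}(hG b bB); apply: mem_imset; exact: perm_inj.
Qed.

Definition same (x y : 'I_n) := [forall b in B, (x \in b) == (y \in b)].

Lemma sameP x y : reflect (forall b, b \in B -> (x \in b) = (y \in b)) (same x y).
Proof.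
apply: (iffP forall_inP) => H b /H; by [move/eqP | move=> ->].
Qed.

Lemma tperm_G x y : same x y -> tperm x y \in G.
Proof.
move/sameP=> H; apply/ptstabP => b bB; apply: perm_imset_fix => z zb.
case: tpermP => [Ez|Ez|//]; move: zb; rewrite Ez; by rewrite (H b bB).
Qed.

Lemma cellE x : cell x = [set y | same y x].
Proof.
apply/setP => y; rewrite inE; apply/idP/idP.
- case/orbitP => h hG <-; apply/sameP => b bB /=; exact: ptstab_mem.
- move=> Hs; apply/orbitP; exists (tperm x y); first by apply: tperm_G; apply/sameP => b bB; move/sameP: Hs => ->.
  by rewrite /= apermE tpermL.
Qed.

Lemma cell_refl x : x \in cell x.
Proof. by rewrite cellE inE; apply/sameP. Qed.

Lemma cell_eq x y : (y \in cell x) = (cell y == cell x).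
Proof.
rewrite !cellE inE; apply/idP/eqP.
- move/sameP=> H; apply/setP => z; rewrite !inE; apply/sameP/sameP => H' b bB; by rewrite H' ?H.
- move=> E; have: y \in [set z | same z y] by rewrite inE; apply/sameP.
  by rewrite E inE.
Qed.

Lemma cell_sym x y : (y \in cell x) = (x \in cell y).
Proof. by rewrite !cell_eq eq_sym. Qed.

Lemma cellG (h : {perm 'I_n}) x : h \in G -> h @: cell x = cell x.
Proof.
move=> hG; apply: perm_imset_fix => z; rewrite !cellE !inE => /sameP H.
apply/sameP => b bB; rewrite ptstab_mem //; exact: H.
Qed.

Lemma cellG_mem (h : {perm 'I_n}) x z : h \in G -> (h z \in cell x) = (z \in cell x).
Proof. by move=> hG; rewrite -{1}(cellG x hG) (mem_imset _ _ (@perm_inj _ h)). Qed.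

Lemma nbhd_cell x y : y \in cell x -> nbhd B y = nbhd B x.
Proof.
rewrite cellE inE => /sameP H; apply/setP => b; rewrite !inE.
by case bB: (b \in B) => //=; rewrite H.
Qed.

Definition prof (beta : {set 'I_n}) x := #|cell x :&: beta|.

Lemma prof_cell beta x y : y \in cell x -> prof beta y = prof beta x.
Proof. by rewrite cell_eq => /eqP; rewrite /prof => ->. Qed.

Lemma prof_act (beta : {set 'I_n}) (h : {perm 'I_n}) x : h \in G -> prof (h @: beta) x = prof beta x.
Proof.
move=> hG; rewrite /prof -{1}(cellG x hG) -imsetI; last by move=> ? ? _ _; exact: perm_inj.
by rewrite card_imset //; exact: perm_inj.
Qed.

Lemma orbit_setact beta gamma : gamma \in orbit 'P^* G beta ->
  exists2 h, h \in G & gamma = h @: beta.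
Proof.
by case/orbitP => h hG <-; exists h.
Qed.

Lemma orbit_prof beta gamma x : gamma \in orbit 'P^* G beta -> prof gamma x = prof beta x.
Proof. by case/orbit_setact => h hG ->; exact: prof_act. Qed.


Lemma sub_card_eq (A C : {set 'I_n}) : A \subset C -> #|C| <= #|A| -> A = C.
Proof. by move=> sAC lCA; apply/eqP; rewrite eqEcard sAC. Qed.

Definition mv (beta : {set 'I_n}) x y := y |: (beta :\ x).

Lemma prof_mv_x (beta : {set 'I_n}) x y z : x \in beta -> y \notin cell z -> x \in cell z ->
  (prof (mv beta x y) z).+1 = prof beta z.
Proof.
move=> xb yz xz; rewrite /prof (cardsD1 x (cell z :&: beta)) inE xz xb /= add1n.
congr (_.+1); apply: eq_card => w; rewrite !inE.
case: (w =P y) => [->|_]; first by rewrite (negbTE yz) andbF. by case: (w \in cell z); rewrite /= ?andbF.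
Qed.

Lemma prof_mv_y (beta : {set 'I_n}) x y z : y \notin beta -> y \in cell z -> x \notin cell z ->
  prof (mv beta x y) z = (prof beta z).+1.
Proof.
move=> yb yz xz; rewrite /prof (cardsD1 y (cell z :&: mv beta x y)) !inE yz eqxx /= add1n.
congr (_.+1); apply: eq_card => w; rewrite !inE.
case: (eqVneq w y) => [->|wy]; first by rewrite (negbTE yb) !andbF.
case: (eqVneq w x) => [->|_]; by rewrite /= ?(negbTE xz) ?andbF.
Qed.

Lemma prof_mv_o (beta : {set 'I_n}) x y z : y \notin cell z -> x \notin cell z ->
  prof (mv beta x y) z = prof beta z.
Proof.
move=> yz xz; rewrite /prof; apply: eq_card => w; rewrite !inE.
case: (w =P y) => [->|]; first by rewrite (negbTE yz).
by case: (w =P x) => [->|]; rewrite ?(negbTE xz).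
Qed.

Lemma card_mv (beta : {set 'I_n}) x y : x \in beta -> y \notin beta -> #|mv beta x y| = #|beta|.
Proof.
move=> xb yb; rewrite /mv cardsU1 !inE (negbTE yb) andbF (cardsD1 x beta) xb.
by rewrite add1n.
Qed.

Lemma prof_orbit (beta gamma : {set 'I_n}) : (forall x, prof gamma x = prof beta x) ->
  gamma \in orbit 'P^* G beta.
Proof.
move Ek: #|gamma :\: beta| => k; elim: k gamma Ek => [|k IH] gamma Ek Hp.
  move/eqP: Ek; rewrite cards_eq0 setD_eq0 => sgb.
  suff ->: gamma = beta by exact: orbit_refl.
  apply/eqP; rewrite eqEsubset sgb /=; apply/subsetP => z zb.
  have: cell z :&: gamma = cell z :&: beta.
    by apply: sub_card_eq; [exact: setIS | have:= Hp z; rewrite /prof => ->].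
  by move/setP/(_ z); rewrite !inE cell_refl zb.
have [x xgb] : exists x, x \in gamma :\: beta.
  by apply/set0Pn; rewrite -card_gt0 Ek.
move: (xgb); rewrite inE => /andP[xnb xg].
have [y yP] : exists y, y \in (cell x :&: beta) :\: gamma.
  apply/set0Pn; apply: contraNneq xnb => /eqP; rewrite setD_eq0 => sub.
  have E: cell x :&: beta = cell x :&: gamma.
    by apply: sub_card_eq; [rewrite subsetI subsetIl | have:= Hp x; rewrite /prof => ->].
  by have:= E; move/setP/(_ x); rewrite !inE cell_refl xg.
move: yP; rewrite !inE => /andP[yng /andP[yx yb]].
have sxy: same x y by have:= yx; rewrite cell_sym cellE inE.
have tG := tperm_G sxy.
set gamma' := tperm x y @: gamma.
have Eg' : gamma' = mv gamma x y.
  apply/setP => z; rewrite /gamma' /mv !inE.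
  rewrite -{1}(tpermK x y z) (mem_imset _ _ (@perm_inj _ (tperm x y))).
  case: tpermP => [->|->|/eqP zx /eqP zy]; rewrite ?eqxx ?(negbTE yng) ?xg //=.
    by case: (x =P y) => [E|]; [rewrite E in xnb; rewrite yb in xnb|].
  by rewrite (negbTE zx) (negbTE zy).
have Hp' : forall z, prof gamma' z = prof beta z by move=> z; rewrite prof_act.
have : gamma' \in orbit 'P^* G beta.
  apply: IH Hp'; apply/eqP; rewrite -eqSS -Ek; apply/eqP.
  rewrite (cardsD1 x (gamma :\: beta)) xgb add1n; congr (_.+1); apply: eq_card => z.
  rewrite Eg' /mv !inE; case: (z =P y) => [->|]; first by rewrite yb /= andbF.
  by move=> _ /=; case: (z \notin beta); case: (z != x).
have g'g : gamma' \in orbit 'P^* G gamma by exact: (mem_orbit 'P^* gamma tG).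
by rewrite (orbit_transl _ g'g).
Qed.

Lemma orbitE (beta gamma : {set 'I_n}) : (gamma \in orbit 'P^* G beta) = [forall x, prof gamma x == prof beta x].
Proof.
apply/idP/forallP => [H x|H]; first by rewrite (orbit_prof x H).
by apply: prof_orbit => x; apply/eqP.
Qed.


Definition Cs := [set cell x | x : 'I_n].

Lemma cell_Cs x : cell x \in Cs.
Proof. by apply/imsetP; exists x. Qed.

Lemma card_orbit_prod (beta : {set 'I_n}) :
  #|orbit 'P^* G beta| = (\prod_(C in Cs) 'C(#|C|, #|C :&: beta|))%N.
Proof.
pose F (C : {set 'I_n}) := [pred S : {set 'I_n} |
  if C \in Cs then (S \subset C) && (#|S| == #|C :&: beta|) else S == set0].
pose phi (g : {set 'I_n}) : {ffun {set 'I_n} -> {set 'I_n}} :=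
  [ffun C => if C \in Cs then C :&: g else set0].
have phi_inj : injective phi.
  move=> g1 g2 E; apply/setP => z.
  have := congr1 (fun f : {ffun {set 'I_n} -> {set 'I_n}} => z \in f (cell z)) E.
  by rewrite /= !ffunE cell_Cs !inE cell_refl.
have im : phi @: orbit 'P^* G beta = [set f | f \in family F].
  apply/setP => f; rewrite inE; apply/imsetP/familyP.
  - case=> g gO -> C; rewrite ffunE inE; case CCs: (C \in Cs) => //; case/imsetP: CCs => x _ E; rewrite E.
    by rewrite subsetIl /= -/(prof g x) (orbit_prof x gO).
  - move=> Hf; pose g := \bigcup_(C in Cs) f C.
    have HfC C : C \in Cs -> (f C \subset C) && (#|f C| == #|C :&: beta|).
      by move=> CCs; have := Hf C; rewrite unfold_in /= CCs.
    have key C : C \in Cs -> C :&: g = f C.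
      move=> CCs; apply/setP => z; rewrite inE; apply/andP/idP.
      + case=> zC /bigcupP[C' C'Cs zf].
        have /andP[sC' _] := HfC C' C'Cs; have zC' := subsetP sC' z zf.
        move: CCs C'Cs zC zC' zf => /imsetP[x _ ->] /imsetP[x' _ ->].
        by rewrite !cell_eq => /eqP -> /eqP ->.
      + move=> zf; have /andP[sC _] := HfC C CCs; split; first exact: subsetP sC z zf.
        by apply/bigcupP; exists C.
    exists g.
    + rewrite orbitE; apply/forallP => x; rewrite /prof key ?cell_Cs //.
      by have /andP[_ ] := HfC _ (cell_Cs x).
    + apply/ffunP => C; rewrite ffunE; case: ifP => CCs; first by rewrite key.
      by have := Hf C; rewrite unfold_in /= CCs => /eqP.
rewrite -(card_imset _ phi_inj) im cardsE card_family foldrE big_image /=.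
rewrite [RHS]big_mkcond; apply: eq_bigr => C _.
case: ifP => CCs.
  rewrite -cards_draws; apply: eq_card => S; rewrite !inE unfold_in.
  by [].
by apply: (@eq_card1 _ set0) => S; rewrite !inE. 
Qed.


Lemma prof_le beta x : prof beta x <= #|cell x|.
Proof. by rewrite /prof subset_leq_card // subsetIl. Qed.

Lemma sum_prof (beta : {set 'I_n}) : (\sum_(C in Cs) #|C :&: beta|)%N = #|beta|.
Proof.
rewrite -[RHS]sum1_card (partition_big (fun z => cell z) (mem Cs)) /=; last first.
  by move=> z _; exact: cell_Cs.
apply: eq_bigr => C /imsetP[x _ ->]; rewrite sum1_card; apply: eq_card => z.
by rewrite !inE cell_eq andbC.
Qed.

Lemma prof_le_eq (beta gamma : {set 'I_n}) : #|beta| = #|gamma| ->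
  (forall x, prof beta x <= prof gamma x) -> forall x, prof beta x = prof gamma x.
Proof.
move=> Ec Hle x; apply/eqP; rewrite eqn_leq Hle /=; rewrite leqNgt; apply/negP => lt.
have: (\sum_(C in Cs) #|C :&: beta| < \sum_(C in Cs) #|C :&: gamma|)%N.
  rewrite (bigD1 (cell x)) ?cell_Cs //= [X in (_ < X)%N](bigD1 (cell x)) ?cell_Cs //=.
  have: (\sum_(C in Cs | C != cell x) #|C :&: beta| <= \sum_(C in Cs | C != cell x) #|C :&: gamma|)%N.
    by apply: leq_sum => C /andP[/imsetP[y _ ->] _]; exact: Hle.
  by move=> h2; rewrite -addSn; apply: leq_add lt h2.
by rewrite !sum_prof Ec ltnn.
Qed.

Lemma surplus_deficit (beta tau : {set 'I_n}) : #|beta| = #|tau| ->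
  (exists x, prof beta x != prof tau x) ->
  exists j k, prof tau j < prof beta j /\ prof beta k < prof tau k.
Proof.
move=> Ec [x nx].
case: (boolP [exists j, prof tau j < prof beta j]) => [/existsP[j Hj]|/existsPn Hj];
case: (boolP [exists k, prof beta k < prof tau k]) => [/existsP[k Hk]|/existsPn Hk].
- by exists j, k.
- have E : forall z, prof tau z = prof beta z.
    by apply: prof_le_eq (esym Ec) _ => z; rewrite leqNgt Hk.
  by rewrite E eqxx in nx.
- have E : forall z, prof beta z = prof tau z.
    by apply: prof_le_eq Ec _ => z; rewrite leqNgt Hj.
  by rewrite E eqxx in nx.
- have E : forall z, prof beta z = prof tau z.
    by apply: prof_le_eq Ec _ => z; rewrite leqNgt Hj.
  by rewrite E eqxx in nx.
Qed.

Lemma prod2 (F : {set 'I_n} -> nat) x y : cell y != cell x ->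
  (\prod_(C in Cs) F C = F (cell x) * (F (cell y) *
     \prod_(C in Cs | (C != cell x) && (C != cell y)) F C))%N.
Proof.
move=> cxy; rewrite (bigD1 (cell x)) ?cell_Cs //= (bigD1 (cell y)) /=; last by rewrite cell_Cs cxy.
by congr (muln _ (muln _ _)); apply: eq_bigl => C; rewrite andbA.
Qed.

Lemma orbit_mv (beta : {set 'I_n}) x y : x \in beta -> y \notin beta -> y \notin cell x ->
  (#|orbit 'P^* G (mv beta x y)| * ((#|cell x| - prof beta x).+1 * (prof beta y).+1) =
   #|orbit 'P^* G beta| * (prof beta x * (#|cell y| - prof beta y)))%N.
Proof.
move=> xb yb yx.
have cxy : cell y != cell x by rewrite -cell_eq.
have xy : x \notin cell y by rewrite cell_sym.
rewrite !card_orbit_prod (prod2 (fun C => 'C(#|C|, #|C :&: mv beta x y|)) cxy).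
rewrite (prod2 (fun C => 'C(#|C|, #|C :&: beta|)) cxy) /=.
set R1 := (\prod_(i in Cs | _) _)%N; set R2 := (\prod_(i in Cs | _) _)%N.
have -> : R1 = R2.
  apply: eq_bigr => C /andP[/imsetP[z _ ->] /andP[n1 n2]].
  rewrite -!/(prof _ z) prof_mv_o //; first by rewrite cell_sym cell_eq.
  by rewrite cell_sym cell_eq.
have Hx := prof_mv_x (y:=y) xb yx (cell_refl x).
have Hy := prof_mv_y (x:=x) yb (cell_refl y) xy.
rewrite -!/(prof _ _) Hy -Hx.
have lex := prof_le beta x; rewrite -Hx in lex.
set a := prof (mv beta x y) x; set b := prof beta y; set d := #|cell x|; set e := #|cell y|.
have H1 := mul_bin_left d a; have H2 := mul_bin_left e b.
have -> : (d - a.+1).+1 = d - a by lia.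
set c1 := 'C(d, a); set c2 := 'C(d, a.+1); set c3 := 'C(e, b); set c4 := 'C(e, b.+1).
rewrite -/c1 -/c2 in H1; rewrite -/c3 -/c4 in H2.
transitivity (c1 * (d - a) * (c4 * b.+1) * R2)%N; first by ring.
have E1 : (c1 * (d - a) = a.+1 * c2)%N by rewrite mulnC H1.
have E2 : (c4 * b.+1 = (e - b) * c3)%N by rewrite mulnC H2.
rewrite E1 E2; ring.
Qed.


Definition maximal r (tau : {set 'I_n}) :=
  forall beta : {set 'I_n}, #|beta| = r -> #|orbit 'P^* G beta| <= #|orbit 'P^* G tau|.

Definition EO (tau : {set 'I_n}) := forall x y, 0 < prof tau x -> prof tau y < #|cell y| ->
  prof tau x * (#|cell y| - prof tau y) <= (#|cell x| - prof tau x).+1 * (prof tau y).+1.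

Lemma orbit_gt0 (beta : {set 'I_n}) : 0 < #|orbit 'P^* G beta|.
Proof. by apply/card_gt0P; exists beta; exact: orbit_refl. Qed.

Lemma exists_in_prof (tau : {set 'I_n}) x : 0 < prof tau x -> exists2 x0, x0 \in tau & x0 \in cell x.
Proof.
rewrite /prof card_gt0 => /set0Pn[x0]; rewrite inE => /andP[h1 h2]; by exists x0.
Qed.

Lemma exists_out_prof (tau : {set 'I_n}) y : prof tau y < #|cell y| -> exists2 y0, y0 \notin tau & y0 \in cell y.
Proof.
move=> lt; have: ~~ (cell y \subset tau).
  apply: contraTN lt => sub; rewrite -leqNgt /prof.
  by rewrite subset_leq_card // subsetI subxx sub.
by case/subsetPn => y0 h1 h2; exists y0.
Qed.

Lemma max_EO r (tau : {set 'I_n}) : #|tau| = r -> maximal r tau -> EO tau.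
Proof.
move=> ct mt x y hx hy.
case: (boolP (y \in cell x)) => yx.
  by rewrite (prof_cell _ yx); move: yx; rewrite cell_eq => /eqP ->; exact: arith0.
rewrite leqNgt; apply/negP => viol.
have [x0 x0t x0x] := exists_in_prof hx.
have [y0 y0t y0y] := exists_out_prof hy.
have Ex : cell x0 = cell x by apply/eqP; rewrite -cell_eq.
have Ey : cell y0 = cell y by apply/eqP; rewrite -cell_eq.
have y0x0 : y0 \notin cell x0.
  by rewrite Ex; apply: contra yx; rewrite !cell_eq Ey.
have E := orbit_mv x0t y0t y0x0.
rewrite Ex Ey (prof_cell _ x0x) (prof_cell _ y0y) in E.
have le := mt _ (etrans (card_mv x0t y0t) ct).
exact: arith2 E le viol (orbit_gt0 tau).
Qed.

Lemma EO_max r (tau : {set 'I_n}) : #|tau| = r -> EO tau -> maximal r tau.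
Proof.
move=> ct eo beta; move Ek: #|beta :\: tau| => k.
elim: k beta Ek => [|k IH] beta Ek cb.
  move/eqP: Ek; rewrite cards_eq0 setD_eq0 => sbt.
  have -> : beta = tau by apply: sub_card_eq => //; rewrite cb ct.
  by [].
case: (boolP [forall x, prof beta x == prof tau x]) => [/forallP Hp|/forallPn Hp].
  have bt : beta \in orbit 'P^* G tau by apply: prof_orbit => x; apply/eqP.
  by move/orbit_eqP: bt => ->.
have [j [kk [Hj Hk]]] := surplus_deficit (etrans cb (esym ct)) Hp.
have [x0 x0P] : exists x0, x0 \in (cell j :&: beta) :\: tau.
  apply/set0Pn; apply: contraTneq Hj => /eqP; rewrite setD_eq0 => sub.
  rewrite -leqNgt /prof subset_leq_card // subsetI subsetIl sub.
  by [].
have [y0 y0P] : exists y0, y0 \in (cell kk :&: tau) :\: beta.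
  apply/set0Pn; apply: contraTneq Hk => /eqP; rewrite setD_eq0 => sub.
  rewrite -leqNgt /prof subset_leq_card // subsetI subsetIl sub.
  by [].
move: x0P y0P; rewrite !inE => /andP[x0t /andP[x0j x0b]] /andP[y0b /andP[y0k y0t]].
have Ex : cell x0 = cell j by apply/eqP; rewrite -cell_eq.
have Ey : cell y0 = cell kk by apply/eqP; rewrite -cell_eq.
have y0x0 : y0 \notin cell x0.
  rewrite cell_eq Ex Ey; apply/negP => /eqP E.
  have := Hk; rewrite /prof E -/(prof beta j) -/(prof tau j) => Hk'.
  by move: (ltn_trans Hj Hk'); rewrite ltnn.
have E := orbit_mv x0b y0b y0x0.
rewrite Ex Ey (prof_cell _ x0j) (prof_cell _ y0k) in E.
have cb' : #|mv beta x0 y0| = r by rewrite card_mv.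
have Ek' : #|mv beta x0 y0 :\: tau| = k.
  apply/eqP; rewrite -eqSS -Ek; apply/eqP.
  rewrite (cardsD1 x0 (beta :\: tau)) inE x0t x0b add1n; congr (_.+1); apply: eq_card => z.
  rewrite /mv !inE; case: (eqVneq z y0) => [->|_]; first by rewrite y0t /= andbF.
  by case: (z \in tau); case: (z != x0).
have le := IH _ Ek' cb'.
apply: leq_trans le; apply: arith3 E _ _; last by [].
apply: (@arith1 _ (prof tau j) _ (prof tau kk)).
- by rewrite Hj prof_le.
- by rewrite Hk prof_le.
- apply: eo.
  + exact: leq_ltn_trans (leq0n _) Hk.
  + exact: leq_trans Hj (prof_le _ _).
Qed.


Lemma ratio_cell x (M : {set 'I_n}) :
  greedy_ratio (cell x) M = ((#|cell x| - prof M x)%:R / (prof M x).+1%:R)%R.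
Proof. by rewrite /greedy_ratio cardsD. Qed.

Lemma ratio_le x y (M : {set 'I_n}) :
  (greedy_ratio (cell x) M <= greedy_ratio (cell y) M)%R =
  ((#|cell x| - prof M x) * (prof M y).+1 <= (#|cell y| - prof M y) * (prof M x).+1)%N.
Proof.
rewrite !ratio_cell ler_pdivrMr ?ltr0Sn // mulrAC ler_pdivlMr ?ltr0Sn //.
by rewrite -!natrM ler_nat.
Qed.

Lemma ratio_eq1 x (M : {set 'I_n}) :
  (greedy_ratio (cell x) M == 1%R) = (#|cell x| - prof M x == (prof M x).+1).
Proof.
rewrite ratio_cell -[X in (_ == X)](divr1 1%R) eqr_div ?oner_neq0 ?pnatr_eq0 //.
by rewrite mulr1 mul1r eqr_nat.
Qed.

Lemma prof_add (M : {set 'I_n}) m z : m \notin M -> prof (m |: M) z = (m \in cell z) + prof M z.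
Proof.
move=> mM; rewrite /prof.
case: (boolP (m \in cell z)) => mz.
  rewrite (cardsD1 m) !inE mz eqxx /=; congr (_ + _); apply: eq_card => w; rewrite !inE.
  by case: (eqVneq w m) => [->|]; rewrite ?(negbTE mM) ?andbF.
rewrite add0n; apply: eq_card => w; rewrite !inE.
by case: (eqVneq w m) => [->|]; rewrite ?(negbTE mz).
Qed.

Lemma step_cell (M : {set 'I_n}) m : greedy_step B M m -> m \notin M /\
  (forall y, greedy_ratio (cell y) M <= greedy_ratio (cell m) M)%R.
Proof.
case=> mM [D [[x0 ->] mD Hmax _]]; split => // y.
have -> : cell m = pt_orbit B x0 by apply/eqP; rewrite -cell_eq.
exact: Hmax.
Qed.

Lemma greedy_EO (M : {set 'I_n}) m : greedy_step B M m -> EO M -> EO (m |: M).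
Proof.
move=> /step_cell[mM Hmax] eo x y.
rewrite !prof_add //.
case: (boolP (m \in cell x)) => mx; case: (boolP (m \in cell y)) => my /=.
- have Ex : cell m = cell x by apply/eqP; rewrite -cell_eq.
  have Ey : cell m = cell y by apply/eqP; rewrite -cell_eq.
  have yx : y \in cell x by rewrite cell_eq -Ey Ex.
  by rewrite (prof_cell M yx) -Ey Ex; move=> _ _; exact: arith0.
- move=> _ hy; rewrite add1n add0n.
  have Em : cell m = cell x by apply/eqP; rewrite -cell_eq.
  have := Hmax y; rewrite ratio_le -/(prof M m) (prof_cell M mx) Em => h.
  apply: arith5 h.
  have := prof_le (m |: M) x; rewrite prof_add // mx add1n.
  by [].
- rewrite add0n add1n => hx hy.
  apply: (arith6 hy); apply: (eo _ _ hx).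
  exact: ltn_trans (ltnSn _) hy.
- by rewrite !add0n; exact: eo.
Qed.


Definition equivp (tau alpha : {set 'I_n}) :=
  forall x, prof tau x = prof alpha x \/ prof tau x + prof alpha x = #|cell x|.

Lemma perm_fix_iff (h : {perm 'I_n}) (S : {set 'I_n}) :
  (h @: S = S) <-> (forall z, (h z \in S) = (z \in S)).
Proof.
split => [E z|H]; first by rewrite -{1}E mem_imset //; exact: perm_inj.
by apply: perm_imset_fix => z zS; rewrite H.
Qed.

Lemma stab_equiv (tau alpha : {set 'I_n}) : equivp tau alpha ->
  'C_G[alpha | 'P^*] \isog 'C_G[tau | 'P^*].
Proof.
move=> eqv; pose flip x := prof alpha x == prof tau x.
pose a' := [set x | if flip x then x \in alpha else x \notin alpha].
have flipG h z : h \in G -> flip (h z) = flip z.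
  move=> hG; have hz : h z \in cell z by rewrite cellG_mem // cell_refl.
  by rewrite /flip !(prof_cell _ hz).
have E1 : 'C_G[alpha | 'P^*] = 'C_G[a' | 'P^*].
  have key h : h \in G -> (h \in 'C[alpha | 'P^*]) = (h \in 'C[a' | 'P^*]).
    move=> hG; apply/astab1P/astab1P => /= /perm_fix_iff H; apply/perm_fix_iff => z.
  - rewrite !inE flipG //; case: (flip z); by rewrite H.
  - have := H z; rewrite !inE flipG //; case: (flip z) => //; by move/negb_inj.
  apply/setP => h; rewrite (in_setI h G) (in_setI h G); case hG: (h \in G) => //=.
  exact: key.
have Pa' : forall x, prof a' x = prof tau x.
  move=> x; have Ecell : cell x :&: a' = if flip x then cell x :&: alpha else cell x :\: alpha.
    apply/setP => z; rewrite !inE; case: (boolP (z \in cell x)) => zx /=; last by case: (flip x); rewrite !inE (negbTE zx) ?andbF.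
    by rewrite /flip !(prof_cell _ zx) -/(flip x); case: (flip x); rewrite !inE zx ?andbT.
  rewrite /prof Ecell; case: (boolP (flip x)) => [/eqP //|fx].
  rewrite cardsD; case: (eqv x) => [E|E]; first by rewrite /flip E eqxx in fx.
  move: E; rewrite /prof; lia.
case/orbitP: (prof_orbit Pa') => h hG Eh.
have E2 : 'C_G[a' | 'P^*] = 'C_G[tau | 'P^*] :^ h.
  by rewrite -Eh astab1_act [RHS]conjIg (conjGid hG).
by rewrite E1 E2 isog_sym conj_isog.
Qed.

Lemma greedy_output_max r (a' : {set 'I_n}) : metagreedy_output r B a' -> #|a'| = r /\ maximal r a'.
Proof.
case=> m [Hs ->].
pose Mj (j : nat) := [set m k | k : 'I_r & k < j].
have H : forall j, j <= r -> #|Mj j| = j /\ EO (Mj j).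
  elim=> [|j IH] hj.
    have -> : Mj 0 = set0.
      by apply/setP => z; rewrite inE; apply/imsetP => -[k]; rewrite inE ltn0.
    split; first by rewrite cards0.
    by move=> x y; rewrite /prof setI0 cards0.
  have jr : j < r by [].
  pose k0 := Ordinal jr.
  have step := Hs k0.
  have EM : Mj j.+1 = m k0 |: Mj j.
    apply/setP => z; rewrite !inE; apply/imsetP/idP.
    - case=> k; rewrite inE ltnS leq_eqVlt => /orP[/eqP kj|kj] ->.
        have -> : k = k0 by apply: val_inj.
        by rewrite eqxx.
      by apply/orP; right; apply/imsetP; exists k => //; rewrite inE.
    - case/orP => [/eqP ->|/imsetP[k kj ->]]; first by exists k0; rewrite // inE.
      by exists k => //; move: kj; rewrite !inE => /ltnW.
  have [cj eoj] := IH (ltnW hj).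
  have /step_cell[mM _] := step.
  rewrite EM; split; first by rewrite cardsU1 mM cj.
  exact: greedy_EO.
have -> : [set m k | k : 'I_r] = Mj r.
  by apply/setP => z; apply/imsetP/imsetP => -[k kP ->]; exists k => //; rewrite inE.
have [c eo] := H r (leqnn r).
by split => //; exact: EO_max.
Qed.


Lemma arith7 az cz dz cw dw : (cz < az -> dz - cz = cz.+1 -> dw - cw = cw.+1 ->
  az * (dw - cw) <= (dz - az).+1 * cw.+1 -> az = cz.+1)%N.
Proof. move=> h1 h2 h3 h4. nia. Qed.

Lemma step_exists r (M tau : {set 'I_n}) : M \subset tau -> #|M| < #|tau| -> #|tau| = r ->
  maximal r tau -> exists m, exists tau' : {set 'I_n},
  [/\ greedy_step B M m, m |: M \subset tau', #|tau'| = r, maximal r tau' & equivp tau' tau].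
Proof.
move=> sMt ltMt ct mt.
have eo := max_EO ct mt.
pose def u := (u \in tau) && (u \notin M).
have [u0 u0d] : exists u0, def u0.
  have : ~~ (tau \subset M) by apply: contraTN ltMt => s; rewrite -leqNgt subset_leq_card.
  by case/subsetPn => u ut uM; exists u; rewrite /def ut uM.
have c_lt u : def u -> prof M u < prof tau u.
  case/andP => ut uM; rewrite /prof; apply: proper_card; rewrite properE setIS //=.
  apply/subsetPn; exists u; by rewrite !inE cell_refl ?ut ?(negbTE uM).
have [z zd zmax] := exists_max (fun y => greedy_ratio (cell y) M) u0d.
have nodef_prof y : ~~ [exists u, (u \in cell y) && def u] -> prof tau y = prof M y.
  move=> nd; rewrite /prof; suff -> : cell y :&: tau = cell y :&: M by [].
  apply/eqP; rewrite eqEsubset (setIS _ sMt) andbT.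
  apply/subsetP => u; rewrite !inE => /andP[uy ut]; rewrite uy /=.
  apply: contraR nd => uM; apply/existsP; exists u; by rewrite uy /def ut uM.
have zglob y : (greedy_ratio (cell y) M <= greedy_ratio (cell z) M)%R.
  case: (boolP [exists u, (u \in cell y) && def u]) => [/existsP[u /andP[uy ud]]|nd].
    have -> : cell y = cell u by apply/esym/eqP; rewrite -cell_eq.
    exact: zmax.
  have Py := nodef_prof y nd; rewrite ratio_le.
  case: (ltnP (prof M y) #|cell y|) => hy; last by rewrite (eqP (_ : _ - _ == 0)) ?subn_eq0.
  have hy' : prof tau y < #|cell y| by rewrite Py.
  have h := eo z y (leq_ltn_trans (leq0n _) (c_lt z zd)) hy'.
  rewrite Py in h; apply: arith4 h; by rewrite c_lt // prof_le.
have zt : z \in tau by case/andP: zd.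
have zM : z \notin M by case/andP: zd.
case: (boolP (greedy_ratio (cell z) M == 1%R)) => r1; last first.
  exists z, tau; split => //.
  - split => //; exists (cell z); split => //; [by exists z | exact: cell_refl |].
    by move=> E; rewrite E eqxx in r1.
  - by rewrite subUset sub1set zt.
  - by move=> x; left.
pose cand w := (w \notin M) && [forall y, greedy_ratio (cell y) M <= greedy_ratio (cell w) M]%R.
have cz : cand z by rewrite /cand zM /=; apply/forallP => y; exact: zglob.
case: (arg_minnP (fun w => #|nbhd B w|) cz) => w /andP[wM /forallP wmax] wmin.
have tie m : cell m = cell w -> forall (m' : 'I_n) (D' : {set 'I_n}),
   m' \notin M -> (exists x, D' = pt_orbit B x) -> m' \in D' ->
   max_orbit B M D' -> #|nbhd B m| <= #|nbhd B m'|.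
  move=> Emw m' D' m'M [x' ->] m'D' mx.
  rewrite (nbhd_cell (_ : m \in cell w)); last by rewrite cell_eq Emw.
  apply: wmin; rewrite /cand m'M /=; apply/forallP => y.
  have -> : cell m' = pt_orbit B x' by apply/eqP; rewrite -cell_eq.
  exact: mx.
case: (boolP [exists u, (u \in cell w) && def u]) => [/existsP[u /andP[uw ud]]|nd].
  have Euw : cell u = cell w by apply/eqP; rewrite -cell_eq.
  exists u, tau; split => //.
  - split; first by case/andP: ud.
    exists (cell w); split => //; try (by exists w); try (by move=> y; exact: wmax); by move=> _; exact: tie.
  - by rewrite subUset sub1set sMt andbT; case/andP: ud.
  - by move=> x; left.
have wt : w \notin tau.
  apply: contra nd => wt; apply/existsP; exists w; by rewrite cell_refl /def wt wM.
have wz : w \notin cell z.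
  apply: contra nd => wz; apply/existsP; exists z; by rewrite -cell_sym wz zd.
have Pw := nodef_prof w nd.
have rw1 : greedy_ratio (cell w) M = 1%R.
  by apply/eqP; rewrite -(eqP r1) eq_le zglob wmax.
move/eqP: rw1; rewrite ratio_eq1 => /eqP hw.
move: r1; rewrite ratio_eq1 => /eqP hz.
have clt := c_lt z zd.
have hwlt : prof tau w < #|cell w| by rewrite Pw; move: hw; clear; lia.
have h := eo z w (leq_ltn_trans (leq0n _) clt) hwlt.
rewrite Pw in h.
have az := arith7 clt hz hw h.
have E := orbit_mv zt wt wz.
have lez := prof_le tau z.
have e1 : (#|cell z| - prof tau z).+1 = prof tau z by move: az hz; clear; lia.
have e2 : #|cell w| - prof tau w = (prof tau w).+1 by rewrite Pw hw.
rewrite e1 e2 in E.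
have EO' : #|orbit 'P^* G (mv tau z w)| = #|orbit 'P^* G tau|.
  apply/eqP; rewrite -(eqn_pmul2r (_ : 0 < prof tau z * (prof tau w).+1)) ?E //.
  by rewrite muln_gt0 /= (leq_ltn_trans (leq0n _) clt).
exists w, (mv tau z w); split.
- split => //; exists (cell w); split => //; try (by exists w); try exact: cell_refl;
  try (by move=> y; exact: wmax); by move=> _; exact: tie.
- apply/subsetP => u; rewrite !inE => /orP[->//|uM]; apply/orP; right.
  rewrite (subsetP sMt _ uM) andbT; by apply: contraNneq zM => <-.
- by rewrite card_mv.
- by move=> beta cb; rewrite EO'; exact: mt.
- move=> x.
  case: (boolP (z \in cell x)) => zx.
    have wx : w \notin cell x.
      apply: contra wz => wx; move: zx wx; rewrite !cell_eq => /eqP <- /eqP ->; by [].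
    have Ez : cell x = cell z by apply/esym/eqP; rewrite -cell_eq.
    right; have := prof_mv_x (y:=w) zt wx zx.
    have -> : prof tau x = prof tau z by rewrite /prof Ez.
    rewrite Ez; move: az hz; clear; lia.
  case: (boolP (w \in cell x)) => wx.
    have Ew : cell x = cell w by apply/esym/eqP; rewrite -cell_eq.
    right; rewrite (prof_mv_y (x:=z) wt wx zx).
    have -> : prof tau x = prof tau w by rewrite /prof Ew.
    rewrite Ew; move: hw Pw; clear; lia.
  by left; rewrite prof_mv_o.
Qed.


Lemma run r (alpha : {set 'I_n}) (x0 : 'I_n) : #|alpha| = r -> maximal r alpha ->
  forall s, s <= r -> exists ms : seq 'I_n, exists tau : {set 'I_n},
  [/\ size ms = s, #|[set x in ms]| = s,
      (forall j, j < s -> greedy_step B [set x in take j ms] (nth x0 ms j)),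
      [set x in ms] \subset tau & [/\ #|tau| = r, maximal r tau & equivp tau alpha]].
Proof.
move=> ca ma; elim=> [|s IH] hs.
  exists [::], alpha; split => //.
  - by apply/eqP; rewrite cards_eq0; apply/eqP/setP => z; rewrite !inE.
  - by apply/subsetP => z; rewrite inE.
  - by split => // x; left.
have [ms [tau [sz cM steps sub [ct mt eqv]]]] := IH (ltnW hs).
have ltMt : #|[set x in ms]| < #|tau| by rewrite cM ct.
have [m [tau' [gs sub' ct' mt' eqv']]] := step_exists sub ltMt ct mt.
have mM : m \notin [set x in ms] by case: gs.
have Eset : [set x in rcons ms m] = m |: [set x in ms].
  by apply/setP => z; rewrite !inE mem_rcons in_cons.
exists (rcons ms m), tau'; split.
- by rewrite size_rcons sz.
- by rewrite Eset cardsU1 mM cM.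
- move=> j; rewrite ltnS leq_eqVlt => /orP[/eqP ->|js].
    by rewrite -cats1 take_size_cat // nth_cat sz ltnn subnn.
  rewrite -cats1 takel_cat ?sz ?(ltnW js) // nth_cat sz js.
  exact: steps.
- by rewrite Eset.
- split => // x; case: (eqv' x) => E1; case: (eqv x) => E2.
  + by left; rewrite E1.
  + by right; rewrite E1.
  + by right; rewrite -E2.
  + by left; move: E1 E2; clear; lia.
Qed.

End Cells.

Theorem lemma2p2 (n r : nat) (B : {set {set 'I_n}}) (alpha : {set 'I_n}) :
  (4 <= 2 * r)%N -> (2 * r < n)%N ->
  (forall b, b \in B -> rsubset r b) ->
  rsubset r alpha ->
  (forall beta : {set 'I_n}, rsubset r beta ->
     #|orbit 'P^* (ptstab B) beta| <= #|orbit 'P^* (ptstab B) alpha|)%N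
  <->
  (exists alpha' : {set 'I_n},
     metagreedy_output r B alpha' /\
     'C_(ptstab B)[alpha | 'P^*] \isog 'C_(ptstab B)[alpha' | 'P^*]).
Proof.
move=> h4 hn _ ra; split.
- move=> Hmax.
  have n0 : 0 < n by move: hn; clear; lia.
  pose x0 := Ordinal n0.
  have [ms [tau [sz cM steps sub [ct mt eqv]]]] := run x0 ra Hmax (leqnn r).
  have Etau : [set x in ms] = tau by apply: sub_card_eq => //; rewrite ct cM.
  have Eimg j : j <= r -> [set nth x0 ms k | k : 'I_r & k < j] = [set x in take j ms].
    move=> jr; apply/setP => z; rewrite inE; apply/imsetP/idP.
    + case=> k; rewrite inE => kj ->; rewrite -(nth_take x0 kj).
      by apply: mem_nth; rewrite size_takel ?sz.
    + case/(nthP x0) => i; rewrite size_takel ?sz // => ij <-; have ir : i < r by exact: leq_trans ij jr.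
      by exists (Ordinal ir); rewrite ?inE // nth_take.
  exists tau; split; last exact: stab_equiv.
  exists (fun k : 'I_r => nth x0 ms k); split.
  + move=> j; rewrite Eimg ?(ltnW (ltn_ord j)) //; exact: steps.
  + rewrite -Etau; have := Eimg r (leqnn r); rewrite -sz take_size sz => <-.
    by apply/setP => z; apply/imsetP/imsetP => -[k kP ->]; exists k => //; rewrite inE ?ltn_ord.
- case=> a' [out iso] beta rb.
  have [ca' ma'] := greedy_output_max out.
  have Eo : #|orbit 'P^* (ptstab B) alpha| = #|orbit 'P^* (ptstab B) a'|.
    rewrite !card_orbit; apply/eqP.
    rewrite -(eqn_pmul2l (cardG_gt0 ('C_(ptstab B)[alpha | 'P^*])%G)) {2}(card_isog iso).
    by rewrite !Lagrange ?subsetIl.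
  by rewrite Eo; exact: ma'.
Qed.
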